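(* Let $G$ be a non-empty finite simple graph and $\pi$ a clique vertex-partition of $G$, with $d=\#\pi$. Then for every $0\le i\le d$, $h_i(\mathrm{Ind}(G^\pi))=f_{i-1}(\mathrm{Ind}(G))$, where $f_{i-1}(\mathrm{Ind}(G))$ is the number of independent sets of size $i$ in $G$ (and is $0$ if there are none). That is, the $h$-vector of $\mathrm{Ind}(G^\pi)$ is the face vector of $\mathrm{Ind}(G)$ (padded with zeros).
   Context: $\mathrm{Ind}(G)$ is the simplicial complex whose faces are the independent sets of $G$. A clique vertex-partition of $G=(V,E)$ is a set $\pi=\{W_1,\ldots,W_t\}$ of pairwise disjoint (possibly empty) cliques of $G$ whose union is $V$; $G^\pi$ is the graph with vertex set $V\cup\{w_1,\ldots,w_t\}$ ($w_i$ new) and edge set $E\cup\{vw_i : v\in W_i\}$. For a $(d-1)$-dimensional simplicial complex $\Delta$, the face vector is $(f_{-1},\ldots,f_{d-1})$ with $f_i$ the number of faces of cardinality $i+1$ (so $f_{-1}=1$), and the $h$-vector is $(h_0,\ldots,h_d)$ with $h_j=\sum_{i=0}^{j}(-1)^{j-i}\binom{d-i}{j-i}f_{i-1}$. *)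

(* Defs.v *)
From mathcomp Require Import all_boot all_order all_algebra.
Set Implicit Arguments. Unset Strict Implicit. Unset Printing Implicit Defensive.
Import GRing.Theory Num.Theory.

Definition simple_graph (V : finType) (e : rel V) : Prop :=
  symmetric e /\ irreflexive e.

Definition independent (V : finType) (e : rel V) (A : {set V}) : bool :=
  [forall x in A, forall y in A, ~~ e x y].

Definition is_clique (V : finType) (e : rel V) (W : {set V}) : bool :=
  [forall x in W, forall y in W, (x != y) ==> e x y].

(* pi = {W_1,...,W_d} : indexed family of pairwise disjoint (possibly empty)
   cliques covering V. *)
Definition clique_vertex_partition (V : finType) (e : rel V) (d : nat)
    (W : 'I_d -> {set V}) : Prop :=
  [/\ forall i, is_clique e (W i),
      forall i j, i != j -> [disjoint W i & W j]
    & \bigcup_(i < d) W i = [set: V]].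

(* G^pi : vertex set V + {w_1..w_d}, edges E plus v w_i for v in W_i. *)
Definition gpi_rel (V : finType) (e : rel V) (d : nat) (W : 'I_d -> {set V})
    : rel (V + 'I_d)%type :=
  fun a b =>
    match a, b with
    | inl u, inl v => e u v
    | inl v, inr i => v \in W i
    | inr i, inl v => v \in W i
    | inr _, inr _ => false
    end.

(* f_{i-1}(Ind G) = number of independent sets of cardinality i. *)
Definition fcount (V : finType) (e : rel V) (i : nat) : nat :=
  #|[set A : {set V} | independent e A & #|A| == i]|.

(* dim Ind(G) + 1 = maximum size of an independent set. *)
Definition ind_d (V : finType) (e : rel V) : nat :=
  \max_(A : {set V} | independent e A) #|A|.

Definition hvec (V : finType) (e : rel V) (j : nat) : int :=
  \sum_(i < j.+1)
     (-1) ^+ (j - i) * ('C(ind_d e - i, j - i))%:Z * (fcount e i)%:Z.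

(* Main.v *)
Require Import Defs.
From Stdlib Require Import Lia.
From mathcomp Require Import all_boot all_order all_algebra.
Set Implicit Arguments. Unset Strict Implicit. Unset Printing Implicit Defensive.

Section Graph.
Variables (V : finType) (e : rel V) (d : nat) (W : 'I_d -> {set V}).
Hypothesis hW : clique_vertex_partition e W.

Lemma independentP (T : finType) (r : rel T) (A : {set T}) :
  reflect (forall x y, x \in A -> y \in A -> ~~ r x y) (independent r A).
Proof.
apply: (iffP forallP) => [H x y xA yA | H x].
  by have /implyP/(_ xA)/forallP/(_ y)/implyP/(_ yA) := H x.
by apply/implyP => xA; apply/forallP => y; apply/implyP => yA; apply: H.
Qed.

Definition phi (p : {set V} * {set 'I_d}) : {set (V + 'I_d)} :=
  inl @: p.1 :|: inr @: p.2.
Definition psi (B : {set (V + 'I_d)}) : {set V} * {set 'I_d} :=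
  ([set v | inl v \in B], [set i | inr i \in B]).

Lemma inl_phi A S x : (inl x \in phi (A, S)) = (x \in A).
Proof.
rewrite /phi in_setU mem_imset; last by move=> ? ? [].
by case: (x \in A) => //=; apply/imsetP => -[].
Qed.

Lemma inr_phi A S x : (inr x \in phi (A, S)) = (x \in S).
Proof.
rewrite /phi in_setU (mem_imset (f := inr)); last by move=> ? ? [].
by case: (x \in S); rewrite ?orbT //= orbF; apply/imsetP => -[].
Qed.

Lemma phiK : cancel phi psi.
Proof. by case=> A S; rewrite /psi; congr pair; apply/setP => x; rewrite inE ?inl_phi ?inr_phi. Qed.

Lemma psiK : cancel psi phi.
Proof. by move=> B; apply/setP => -[x|x]; rewrite ?inl_phi ?inr_phi inE. Qed.

Lemma phi_inj : injective phi. Proof. exact: can_inj phiK. Qed.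

Lemma card_phi A S : #|phi (A, S)| = #|A| + #|S|.
Proof.
rewrite /phi cardsU !card_imset; try by move=> ? ? [].
suff -> : inl @: A :&: inr @: S = set0 by rewrite cards0 subn0.
apply/setP => x; rewrite !inE; apply/negP => /andP[/imsetP[y _ ->] /imsetP[z _]] //.
Qed.

Definition free (A : {set V}) := [set i | [disjoint W i & A]].

Lemma indep_phi A S :
  independent (gpi_rel e W) (phi (A, S)) = independent e A && (S \subset free A).
Proof.
apply/independentP/andP => [H | [/independentP HA /subsetP HS]].
  split.
    by apply/independentP => x y xA yA; apply: (H (inl x) (inl y)); rewrite inl_phi.
  apply/subsetP => i iS; rewrite inE; apply/pred0P => v /=.
  apply/negP => /andP [vW vA].
  by have := H (inr i) (inl v); rewrite inr_phi inl_phi /= vW => /(_ iS vA).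
move=> [x|x] [y|y]; rewrite ?inl_phi ?inr_phi //=; first exact: HA.
  move=> xA yS; have := HS _ yS; rewrite inE => /pred0P/(_ x) /=.
  by rewrite xA andbT => ->.
move=> xS yA; have := HS _ xS; rewrite inE => /pred0P/(_ y) /=.
by rewrite yA andbT => ->.
Qed.

Lemma card_free A : independent e A -> #|free A| + #|A| = d.
Proof.
case: hW => hcl hdis hcov /independentP hA.
have one v : \sum_(i < d) (v \in W i) = 1.
  have : v \in \bigcup_(i < d) W i by rewrite hcov inE.
  case/bigcupP => i0 _ vi0.
  rewrite (bigD1 i0) //= vi0 big1 // => i ni.
  case vi: (v \in W i) => //.
  have := hdis _ _ ni; move/pred0P/(_ v) => /=; by rewrite vi vi0.
have cA : #|A| = \sum_(i < d) #|A :&: W i|.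
  rewrite -sum1_card.
  rewrite (eq_bigr (fun v => \sum_(i < d) (v \in W i))); last by move=> v _; rewrite one.
  rewrite exchange_big /=; apply: eq_bigr => i _.
  rewrite -sum1_card big_mkcond /= [RHS]big_mkcond /=; apply: eq_bigr => v _.
  by rewrite inE; case: (v \in A); case: (v \in W i).
have c1 i : #|A :&: W i| = ~~ [disjoint W i & A].
  case: (boolP [disjoint W i & A]) => hd.
    apply/eqP; rewrite cards_eq0; apply/eqP/setP => v; rewrite !inE.
    by move/pred0P: hd => /(_ v) /=; rewrite andbC => ->.
  case/pred0Pn: hd => x /= /andP[xW xA].
  suff -> : A :&: W i = [set x] by rewrite cards1.
  apply/setP => y; rewrite !inE; apply/andP/eqP => [[yA yW]|->] //.
  apply/eqP; apply: contraT => yx.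
  have := hcl i; move/forallP/(_ y)/implyP/(_ yW)/forallP/(_ x)/implyP/(_ xW)/implyP/(_ yx).
  by rewrite (negbTE (hA y x yA xA)).
rewrite cA (eq_bigr _ (fun i _ => c1 i)).
have -> : #|free A| = \sum_(i < d) [disjoint W i & A].
  by rewrite -sum1_card big_mkcond /=; apply: eq_bigr => i _; rewrite inE; case: [disjoint _ & _].
rewrite -big_split /= (eq_bigr (fun _ => 1)); last by move=> i _; case: [disjoint _ & _].
by rewrite sum1_card card_ord.
Qed.

Lemma card_set_sum (T : finType) (P : pred T) : #|[set x | P x]| = \sum_x P x.
Proof.
rewrite -sum1_card big_mkcond /=; apply: eq_bigr => x _; rewrite inE; by case: (P x).
Qed.

Lemma fcount_gpi k :
  fcount (gpi_rel e W) k = \sum_(a < k.+1) fcount e a * 'C(d - a, k - a).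
Proof.
rewrite /fcount.
have -> : [set B | independent (gpi_rel e W) B & #|B| == k] =
   phi @: [set p | independent (gpi_rel e W) (phi p) & #|phi p| == k].
  apply/setP => B; rewrite inE; apply/idP/imsetP => [H | [p]]; last by rewrite inE => H ->.
  by exists (psi B); rewrite ?inE psiK.
rewrite card_imset; last exact: phi_inj.
rewrite card_set_sum.
rewrite (eq_bigr (fun p => (fun A S => (independent (gpi_rel e W) (phi (A, S)) &&
                  (#|phi (A, S)| == k) : nat)) p.1 p.2)); last by case.
rewrite -(pair_bigA _ (fun A S => (independent (gpi_rel e W) (phi (A, S)) && (#|phi (A, S)| == k) : nat))) /=.
under [RHS]eq_bigr => a _ do rewrite card_set_sum big_distrl.
rewrite [RHS]exchange_big /=; apply: eq_bigr => A _.
under eq_bigr => S _ do rewrite indep_phi card_phi.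
case: (boolP (independent e A)) => hA /=; last by rewrite !big1.
case: (leqP #|A| k) => hk.
  rewrite [RHS](bigD1 (Ordinal (hk : #|A| < k.+1))) //= eqxx mul1n [X in _ + X]big1 ?addn0; last first.
    move=> a na; case: eqP => // ha; case/negP: na; apply/eqP/val_inj; by rewrite /= ha.
  have -> : d - #|A| = #|free A|.
    have h := card_free hA.
    have hAd : #|A| <= d by apply: leq_trans (leq_addl #|free A| #|A|) _; rewrite h.
    by apply/eqP; rewrite -(eqn_add2r #|A|) h subnK.
  rewrite -card_set_sum -cards_draws.
  apply: eq_card => S; rewrite !inE; congr (_ && _).
  by rewrite -[RHS](eqn_add2l #|A|) subnKC.
rewrite !big1 // => [a _|S _].
  suff -> : (#|A| == a) = false by [].
  by apply: gtn_eqF; apply: (leq_trans _ hk); exact: ltn_ord.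
suff -> : (#|A| + #|S| == k) = false by rewrite andbF.
by apply: gtn_eqF; apply: leq_trans hk (leq_addr _ _).
Qed.

Lemma ind_d_gpi : ind_d (gpi_rel e W) = d.
Proof.
apply/eqP; rewrite eqn_leq; apply/andP; split.
  apply/bigmax_leqP => B hB; rewrite -(psiK B) in hB *.
  case: (psi B) hB => A S; rewrite indep_phi card_phi => /andP[hA hS].
  apply: leq_trans (_ : _ <= #|free A| + #|A|) _; last by rewrite (card_free hA).
  rewrite addnC leq_add2r; exact: subset_leq_card.
have h0 : independent (gpi_rel e W) (phi (set0, setT)).
  rewrite indep_phi; apply/andP; split.
    by apply/independentP => x y; rewrite inE.
  by apply/subsetP => i _; rewrite inE; apply/pred0P => v /=; rewrite inE andbF.
apply: leq_trans (leq_bigmax_cond _ h0).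
by rewrite card_phi cards0 cardsT card_ord.
Qed.
End Graph.

Section Alg.
Import GRing.Theory Num.Theory.

Lemma binom_tri N J I : I <= J -> J <= N ->
  'C(N - I, J - I) * 'C(N, I) = 'C(N, J) * 'C(J, I).
Proof.
move=> hIJ hJN.
have hIN := leq_trans hIJ hJN.
have hpos : 0 < I`! * (J - I)`! * (N - J)`! by rewrite !muln_gt0 !fact_gt0.
apply/eqP; rewrite -(eqn_pmul2r hpos); apply/eqP.
have e1 : N - I - (J - I) = N - J by rewrite subnBA // subnK.
have h1 := bin_fact (leq_sub2r I hJN); rewrite e1 in h1.
have h2 := bin_fact hIN.
have h3 := bin_fact hIJ.
have h4 := bin_fact hJN.
transitivity N`!.
  rewrite -h2 -h1; rewrite -!multE.
lia.
rewrite -h4 -h3; rewrite -!multE; lia.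
Qed.

Local Open Scope ring_scope.

Lemma altsum J : \sum_(m < J.+1) (-1) ^+ (J - m) * ('C(J, m))%:R = (J == 0%N)%:R :> int.
Proof.
rewrite -expr0n -(addNr (1 : int)) exprDn; apply: eq_bigr => m _.
by rewrite expr1n mulr1 mulr_natr.
Qed.

Lemma key N J : (J <= N)%N ->
  \sum_(m < J.+1) (-1) ^+ (J - m) * ('C(N - m, J - m))%:R * ('C(N, m))%:R
    = (J == 0%N)%:R :> int.
Proof.
move=> hJN.
under eq_bigr => m _ do rewrite -mulrA -natrM (binom_tri (ltn_ord m : (m <= J)%N) hJN) natrM mulrCA.
rewrite -mulr_sumr altsum.
by case: J hJN => [|J] _; rewrite ?bin0 ?mulr1 ?mulr0.
Qed.

Lemma shift_sum (F : nat -> int) a j : (a <= j)%N ->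
  \sum_(i < j.+1 | (a <= i)%N) F i = \sum_(m < (j - a).+1) F (a + m)%N.
Proof.
move=> haj.
rewrite -(big_mkord (fun i => (a <= i)%N)) (big_cat_nat (n := a)) //=; last by rewrite ltnW // ltnS.
rewrite big_nat_cond big1 ?add0r; last by move=> i /andP[/andP[_ ia] ai]; rewrite leqNgt ia in ai.
rewrite -{1}(add0n a) big_addn.
rewrite -(big_mkord xpredT (fun m => F (a + m)%N)) subSn //.
apply: congr_big_nat => // i _; first by rewrite leq_addl.
by rewrite addnC.
Qed.

Lemma inner d j a (f : nat) : (a <= j)%N -> (j <= d)%N ->
  \sum_(i < j.+1) (-1) ^+ (j - i) * ('C(d - i, j - i))%:R *
     (if (a < i.+1)%N then (f * 'C(d - a, i - a))%:R else 0)
  = (a == j)%:R * f%:R :> int.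
Proof.
move=> haj hjd.
rewrite (eq_bigr (fun i : 'I_j.+1 => if (a <= i)%N then (-1) ^+ (j - i) *
   ('C(d - i, j - i))%:R * ((f * 'C(d - a, i - a))%:R) else 0)); last first.
  by move=> i _; rewrite ltnS; case: ifP; rewrite ?mulr0.
rewrite -big_mkcond /= (shift_sum (fun i => (-1) ^+ (j - i) *
   ('C(d - i, j - i))%:R * ((f * 'C(d - a, i - a))%:R)) haj).
under eq_bigr => m _ do rewrite addKn subnDA [(d - (a + m))%N]subnDA natrM mulrCA.
rewrite -mulr_sumr key; last exact: leq_sub2r.
by rewrite subn_eq0 mulrC eqn_leq haj.
Qed.

Lemma halg (d j : nat) (f : nat -> nat) : (j <= d)%N ->
  \sum_(i < j.+1) (-1) ^+ (j - i) * ('C(d - i, j - i))%:Z *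
     (\sum_(a < i.+1) f a * 'C(d - a, i - a))%:Z = (f j)%:Z.
Proof.
move=> hjd.
under eq_bigr => i _ do rewrite -!natz natr_sum (@big_ord_widen _ 0 +%R i.+1 j.+1 (fun a => (f a * 'C(d - a, i - a))%:R) (ltn_ord i)) big_mkcond mulr_sumr.
rewrite exchange_big /= big_ord_recr /= big1 ?add0r.
  by rewrite inner // eqxx mul1r natz.
move=> a _; rewrite inner ?(ltnW (ltn_ord a)) //.
by rewrite ltn_eqF ?mul0r.
Qed.
End Alg.

Theorem proposition3p5 (V : finType) (e : rel V) (d : nat) (W : 'I_d -> {set V}) :
  simple_graph e -> (0 < #|V|)%N -> clique_vertex_partition e W ->
  forall i : nat, (i <= d)%N ->
    hvec (gpi_rel e W) i = Posz (fcount e i).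
Proof.
move=> _ _ hW i hid.
rewrite /hvec (ind_d_gpi hW).
under eq_bigr => k _ do rewrite (fcount_gpi hW).
exact: (halg (fun a => fcount e a) hid).
Qed.
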